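(* Let $f_1,f_2$ be strongly hyperbolic functions. Let $C\in\mathcal{C}^-(f_1,f_2)$, $p\in C$, $q\notin C$, with $q$ not parallel to $p$. Then there is at most one $D\in\mathcal{C}^-(f_1,f_2)$ with $p,q\in D$ and $C\cap D=\{p\}$.
   Context: Identify $\mathbb{S}^1$ with $\mathbb{R}\cup\{\infty\}$, $\mathcal{P}=\mathbb{S}^1\times\mathbb{S}^1$, $\mathbb{R}^+=(0,\infty)$. Two points of $\mathcal{P}$ are parallel if they have the same first coordinate or the same second coordinate. A function $f:\mathbb{R}^+\to\mathbb{R}^+$ is strongly hyperbolic if: (1) $\lim_{x\to0+}f(x)=+\infty$, $\lim_{x\to+\infty}f(x)=0$; (2) $f$ strictly convex; (3) $\lim_{x\to+\infty}f(x+b)/f(x)=1$ for each $b\in\mathbb{R}$; (4) $f$ differentiable; (5) $\ln|f'|$ strictly convex. For $a>0$, $b,c\in\mathbb{R}$: $f_{a,b,c}(x)=af_1(x+b)+c$ for $x>-b$, $f_{a,b,c}(x)=-af_2(-x-b)+c$ for $x<-b$; $\overline{f_{a,b,c}}=\{(x,f_{a,b,c}(x)):x\ne-b\}\cup\{(-b,\infty),(\infty,c)\}$; $\overline{l_{s,t}}=\{(x,sx+t):x\in\mathbb{R}\}\cup\{(\infty,\infty)\}$; $\mathcal{C}^-(f_1,f_2)=\{\overline{f_{a,b,c}}:a>0,b,c\in\mathbb{R}\}\cup\{\overline{l_{s,t}}:s<0,t\in\mathbb{R}\}$. *)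

(* Defs.v *)
From Stdlib Require Import Reals.
Open Scope R_scope.

(* S^1 = R ∪ {∞}, encoded as option R with None = ∞. *)
Definition S1 : Type := option R.
Definition Pt : Type := (S1 * S1)%type.

Definition parallel (p q : Pt) : Prop := fst p = fst q \/ snd p = snd q.

Definition strictly_convex_pos (g : R -> R) : Prop :=
  forall x y t, 0 < x -> 0 < y -> x <> y -> 0 < t < 1 ->
    g (t * x + (1 - t) * y) < t * g x + (1 - t) * g y.

(* f : R+ -> R+ is strongly hyperbolic (only values on (0,∞) matter). *)
Definition strongly_hyperbolic (f : R -> R) : Prop :=
  (forall x, 0 < x -> 0 < f x) /\
  (forall M, exists d, 0 < d /\ forall x, 0 < x < d -> M < f x) /\
  (forall eps, 0 < eps -> exists N, forall x, N < x -> 0 < x -> Rabs (f x) < eps) /\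
  strictly_convex_pos f /\
  (forall b eps, 0 < eps -> exists N, forall x, N < x -> 0 < x -> 0 < x + b ->
       Rabs (f (x + b) / f x - 1) < eps) /\
  (exists f' : R -> R,
     (forall x, 0 < x -> derivable_pt_lim f x (f' x)) /\
     strictly_convex_pos (fun x => ln (Rabs (f' x)))).

Definition fabc (f1 f2 : R -> R) (a b c x : R) : R :=
  if Rlt_dec (- b) x then a * f1 (x + b) + c else - a * f2 (- x - b) + c.

Definition fbar (f1 f2 : R -> R) (a b c : R) : Pt -> Prop :=
  fun z =>
    (exists x, x <> - b /\ z = (Some x, Some (fabc f1 f2 a b c x))) \/
    z = (Some (- b), None) \/ z = (None, Some c).

Definition lbar (s t : R) : Pt -> Prop :=
  fun z => (exists x, z = (Some x, Some (s * x + t))) \/ z = (None, None).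

Definition in_Cminus (f1 f2 : R -> R) (C : Pt -> Prop) : Prop :=
  (exists a b c, 0 < a /\ C = fbar f1 f2 a b c) \/
  (exists s t, s < 0 /\ C = lbar s t).

(* Main.v *)
Require Import Defs.
From Stdlib Require Import Reals Lra Ranalysis5 Classical.
Open Scope R_scope.

Definition sconv (S : R -> Prop) (g : R -> R) : Prop :=
  forall u w t, S u -> S w -> u <> w -> 0 < t < 1 ->
    g (t * u + (1 - t) * w) < t * g u + (1 - t) * g w.

Lemma sh_pos f : strongly_hyperbolic f -> forall x, 0 < x -> 0 < f x.
Proof. intros H; apply H. Qed.
Lemma sh_lim0 f : strongly_hyperbolic f ->
  forall M, exists d, 0 < d /\ forall x, 0 < x < d -> M < f x.
Proof. intros H; apply H. Qed.
Lemma sh_liminf f : strongly_hyperbolic f ->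
  forall eps, 0 < eps -> exists N, forall x, N < x -> 0 < x -> Rabs (f x) < eps.
Proof. intros H; apply H. Qed.
Lemma sh_conv f : strongly_hyperbolic f -> strictly_convex_pos f.
Proof. intros H; apply H. Qed.
Lemma sh_ratio f : strongly_hyperbolic f ->
  forall b eps, 0 < eps -> exists N, forall x, N < x -> 0 < x -> 0 < x + b ->
       Rabs (f (x + b) / f x - 1) < eps.
Proof. intros H; apply H. Qed.

Lemma Rabs_lb x : - Rabs x <= x.
Proof. pose proof (Rle_abs (- x)). rewrite Rabs_Ropp in H. lra. Qed.

Lemma E0 f : strongly_hyperbolic f -> forall K x1, 0 < x1 -> exists v, 0 < v < x1 /\ K < f v.
Proof.
  intros H K x1 Hx1. destruct (sh_lim0 f H K) as [d [Hd Hf]].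
  exists (Rmin d x1 / 2).
  assert (Rmin d x1 <= d) by apply Rmin_l. assert (Rmin d x1 <= x1) by apply Rmin_r.
  assert (0 < Rmin d x1) by (apply Rmin_glb_lt; lra).
  split; [lra|]. apply Hf; lra.
Qed.

Lemma Einf f : strongly_hyperbolic f -> forall eps x1, 0 < eps ->
  exists v, x1 < v /\ 0 < v /\ f v < eps.
Proof.
  intros H eps x1 He. destruct (sh_liminf f H eps He) as [N HN].
  set (v := Rmax (Rmax N x1) 0 + 1).
  assert (Rmax N x1 <= Rmax (Rmax N x1) 0) by apply Rmax_l.
  assert (0 <= Rmax (Rmax N x1) 0) by apply Rmax_r.
  assert (N <= Rmax N x1) by apply Rmax_l. assert (x1 <= Rmax N x1) by apply Rmax_r.
  exists v. unfold v. split; [lra|]. split; [lra|].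
  eapply Rle_lt_trans; [apply Rle_abs|]. apply HN; lra.
Qed.

Lemma sh_dec f : strongly_hyperbolic f -> forall x y, 0 < x -> x < y -> f y < f x.
Proof.
  intros H x y Hx Hxy. destruct (Rlt_dec (f y) (f x)) as [|Hn]; auto. exfalso.
  apply Rnot_lt_le in Hn.
  assert (Hw : forall w, y < w -> f y < f w).
  { intros w Hw. set (t := (w - y) / (w - x)).
    assert (Ht0 : 0 < t) by (unfold t; apply Rdiv_lt_0_compat; lra).
    assert (Ht1 : t < 1) by (unfold t; apply (Rmult_lt_reg_r (w - x)); [lra|];
      unfold Rdiv; rewrite Rmult_assoc, Rinv_l; lra).
    assert (Hc := sh_conv f H x w t ltac:(lra) ltac:(lra) ltac:(lra) ltac:(lra)).
    replace (t * x + (1 - t) * w) with y in Hc by (unfold t; field; lra).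
    assert (t * f x <= t * f y) by (apply Rmult_le_compat_l; lra).
    assert ((1 - t) * f y < (1 - t) * f w) by lra.
    apply Rmult_lt_reg_l in H1; lra. }
  destruct (Einf f H (f y) y (sh_pos f H y ltac:(lra))) as [v [Hv1 [Hv2 Hv3]]].
  specialize (Hw v Hv1). lra.
Qed.

Lemma tangent_weak S g x0 y m : sconv S g -> S x0 -> S y -> y <> x0 ->
  derivable_pt_lim g x0 m -> m * (y - x0) <= g y - g x0.
Proof.
  intros Hc Hx0 Hy Hne Hd. destruct (Rle_dec (m * (y - x0)) (g y - g x0)) as [|Hn]; auto.
  exfalso. apply Rnot_le_lt in Hn.
  set (e := y - x0). set (Dd := g y - g x0). fold e Dd in Hn.
  assert (He : 0 < Rabs e) by (apply Rabs_pos_lt; unfold e; lra).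
  set (eps := (m * e - Dd) / (2 * Rabs e)).
  assert (Heps : 0 < eps) by (unfold eps; apply Rdiv_lt_0_compat; lra).
  destruct (Hd eps Heps) as [del Hdel].
  assert (Hdp := cond_pos del).
  set (t := Rmin (1/2) (del / (2 * Rabs e))).
  assert (Ht1 : t <= 1/2) by apply Rmin_l.
  assert (Ht2 : t <= del / (2 * Rabs e)) by apply Rmin_r.
  assert (Ht0 : 0 < t) by (apply Rmin_glb_lt; [lra| apply Rdiv_lt_0_compat; lra]).
  assert (Hh0 : t * e <> 0) by (apply Rmult_integral_contrapositive; split; unfold e; lra).
  assert (Hhd : Rabs (t * e) < del).
  { rewrite Rabs_mult, (Rabs_right t) by lra.
    apply Rle_lt_trans with (del / (2 * Rabs e) * Rabs e).
    - apply Rmult_le_compat_r; lra.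
    - replace (del / (2 * Rabs e) * Rabs e) with (del / 2) by (field; lra). lra. }
  specialize (Hdel (t * e) Hh0 Hhd).
  assert (Hcv := Hc y x0 t Hy Hx0 Hne ltac:(lra)).
  replace (t * y + (1 - t) * x0) with (x0 + t * e) in Hcv by (unfold e; ring).
  set (Q := (g (x0 + t * e) - g x0) / (t * e)) in Hdel.
  assert (HQ : Q * (t * e) = g (x0 + t * e) - g x0) by (unfold Q; unfold Rdiv; rewrite Rmult_assoc, Rinv_l; [ring|auto]).
  assert (HQe : t * (Q * e) < t * Dd) by (unfold Dd; nra).
  apply Rmult_lt_reg_l in HQe; [|lra].
  assert (H1 : - (Rabs (Q - m) * Rabs e) <= (Q - m) * e).
  { rewrite <- Rabs_mult. pose proof (Rabs_lb ((Q - m) * e)). lra. }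
  assert (H2 : Rabs (Q - m) * Rabs e < eps * Rabs e) by (apply Rmult_lt_compat_r; lra).
  replace (eps * Rabs e) with ((m * e - Dd) / 2) in H2 by (unfold eps; field; lra).
  lra.
Qed.

Lemma tangent S g x0 x m : sconv S g ->
  (forall u w z, S u -> S w -> u <= z <= w -> S z) -> S x0 -> S x -> x <> x0 ->
  derivable_pt_lim g x0 m -> g x0 + m * (x - x0) < g x.
Proof.
  intros Hc Hi Hx0 Hx Hne Hd.
  set (x' := (x0 + x) / 2).
  assert (Hx' : S x').
  { destruct (Rle_dec x0 x). - apply (Hi x0 x); auto; unfold x'; lra.
    - apply (Hi x x0); auto; unfold x'; lra. }
  assert (Hw := tangent_weak S g x0 x' m Hc Hx0 Hx' ltac:(unfold x'; lra) Hd).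
  assert (Hcv := Hc x x0 (1/2) Hx Hx0 Hne ltac:(lra)).
  replace (1 / 2 * x + (1 - 1 / 2) * x0) with x' in Hcv by (unfold x'; field).
  replace (x' - x0) with ((x - x0) / 2) in Hw by (unfold x'; field). lra.
Qed.

Lemma ivt_up h a b : a < b -> (forall x, a <= x <= b -> continuity_pt h x) ->
  h a < 0 -> 0 < h b -> exists z, a < z < b /\ h z = 0.
Proof.
  intros Hab Hc Ha Hb. destruct (IVT_interv h a b Hc Hab Ha Hb) as [z [Hz Hz0]].
  exists z. split; auto. destruct Hz as [H1 H2]. split.
  - destruct H1 as [|H1]; auto. subst; lra.
  - destruct H2 as [|H2]; auto. subst; lra.
Qed.

Lemma ivt_down h a b : a < b -> (forall x, a <= x <= b -> continuity_pt h x) ->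
  0 < h a -> h b < 0 -> exists z, a < z < b /\ h z = 0.
Proof.
  intros Hab Hc Ha Hb.
  destruct (ivt_up (fun x => - h x) a b Hab) as [z [Hz Hz0]]; try lra.
  - intros x Hx. apply (continuity_pt_opp h). auto.
  - exists z; split; auto; lra.
Qed.

Lemma dcont f x l : derivable_pt_lim f x l -> continuity_pt f x.
Proof. intros H. apply derivable_continuous_pt. exists l. exact H. Qed.

Lemma cross_pos h Xl x0 Xr m : Xl < x0 < Xr ->
  (forall x, Xl <= x <= Xr -> continuity_pt h x) -> h x0 = 0 ->
  derivable_pt_lim h x0 m -> m <> 0 -> 0 < h Xl -> 0 < h Xr ->
  exists z, Xl < z < Xr /\ z <> x0 /\ h z = 0.
Proof.
  intros Hx Hc H0 Hd Hm Hl Hr.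
  assert (Hm2 : 0 < Rabs m / 2) by (pose proof (Rabs_pos_lt m Hm); lra).
  destruct (Hd _ Hm2) as [del Hdel]. assert (Hdp := cond_pos del).
  destruct (Rlt_dec 0 m) as [Hmp|Hmn].
  - set (k := Rmin (del / 2) ((x0 - Xl) / 2)).
    assert (k <= del / 2) by apply Rmin_l. assert (k <= (x0 - Xl) / 2) by apply Rmin_r.
    assert (0 < k) by (apply Rmin_glb_lt; lra).
    specialize (Hdel (- k) ltac:(lra) ltac:(rewrite Rabs_Ropp, Rabs_right; lra)).
    rewrite H0, Rminus_0_r in Hdel. rewrite Rabs_right in Hm2 by lra.
    assert (HQ : 0 < h (x0 + - k) / - k).
    { apply Rabs_def2 in Hdel. rewrite Rabs_right in Hdel by lra. lra. }
    assert (Hneg : h (x0 + - k) < 0).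
    { destruct (Rlt_dec (h (x0 + - k)) 0) as [|Hn]; auto. exfalso.
      apply Rnot_lt_le in Hn. unfold Rdiv in HQ.
      assert (0 < / k) by (apply Rinv_0_lt_compat; lra).
      rewrite Rinv_opp in HQ. nra. }
    destruct (ivt_down h Xl (x0 + - k)) as [z [Hz Hz0]]; try lra.
    + intros x Hx'. apply Hc. lra.
    + exists z. split; [lra|]. split; [lra| auto].
  - assert (Hmn' : m < 0) by lra.
    set (k := Rmin (del / 2) ((Xr - x0) / 2)).
    assert (k <= del / 2) by apply Rmin_l. assert (k <= (Xr - x0) / 2) by apply Rmin_r.
    assert (0 < k) by (apply Rmin_glb_lt; lra).
    specialize (Hdel k ltac:(lra) ltac:(rewrite Rabs_right; lra)).
    rewrite H0, Rminus_0_r in Hdel. rewrite Rabs_left in Hm2 by lra.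
    assert (HQ : h (x0 + k) / k < 0).
    { apply Rabs_def2 in Hdel. rewrite Rabs_left in Hdel by lra. lra. }
    assert (Hneg : h (x0 + k) < 0).
    { destruct (Rlt_dec (h (x0 + k)) 0) as [|Hn]; auto. exfalso.
      apply Rnot_lt_le in Hn. unfold Rdiv in HQ.
      assert (0 < / k) by (apply Rinv_0_lt_compat; lra). nra. }
    destruct (ivt_up h (x0 + k) Xr) as [z [Hz Hz0]]; try lra.
    + intros x Hx'. apply Hc. lra.
    + exists z. split; [lra|]. split; [lra| auto].
Qed.

Lemma cross_neg h Xl x0 Xr m : Xl < x0 < Xr ->
  (forall x, Xl <= x <= Xr -> continuity_pt h x) -> h x0 = 0 ->
  derivable_pt_lim h x0 m -> m <> 0 -> h Xl < 0 -> h Xr < 0 ->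
  exists z, Xl < z < Xr /\ z <> x0 /\ h z = 0.
Proof.
  intros Hx Hc H0 Hd Hm Hl Hr.
  destruct (cross_pos (fun x => - h x) Xl x0 Xr (- m)) as [z [Hz1 [Hz2 Hz3]]]; try lra.
  - intros x Hx'. apply (continuity_pt_opp h). auto.
  - apply (derivable_pt_lim_opp h). auto.
  - exists z. split; auto. split; auto. lra.
Qed.

Lemma d_shift f x b l : derivable_pt_lim f (x + b) l ->
  derivable_pt_lim (fun y => f (y + b)) x l.
Proof.
  intros H eps He. destruct (H eps He) as [d Hd]. exists d. intros h Hh Hhd.
  replace (x + h + b) with (x + b + h) by ring. apply Hd; auto.
Qed.

Lemma d_refl f x b l : derivable_pt_lim f (- x - b) l ->
  derivable_pt_lim (fun y => f (- y - b)) x (- l).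
Proof.
  intros H eps He. destruct (H eps He) as [d Hd]. exists d. intros h Hh Hhd.
  replace (- (x + h) - b) with (- x - b + - h) by ring.
  assert (Hh' : - h <> 0) by lra.
  assert (Hhd' : Rabs (- h) < d) by (rewrite Rabs_Ropp; auto).
  specialize (Hd (- h) Hh' Hhd').
  replace ((f (- x - b + - h) - f (- x - b)) / h - - l)
    with (- ((f (- x - b + - h) - f (- x - b)) / - h - l)) by (field; auto).
  rewrite Rabs_Ropp. auto.
Qed.

Lemma d_aff g x l a c : derivable_pt_lim g x l ->
  derivable_pt_lim (fun y => a * g y + c) x (a * l).
Proof.
  intros H.
  pose proof (derivable_pt_lim_plus (mult_real_fct a g) (fct_cte c) x (a * l) 0
     (derivable_pt_lim_scal g a x l H) (derivable_pt_lim_const c x)) as H'.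
  replace (a * l) with (a * l + 0) by ring. exact H'.
Qed.

Lemma d_minus g1 g2 x l1 l2 : derivable_pt_lim g1 x l1 -> derivable_pt_lim g2 x l2 ->
  derivable_pt_lim (fun y => g1 y - g2 y) x (l1 - l2).
Proof. intros H1 H2. exact (derivable_pt_lim_minus g1 g2 x l1 l2 H1 H2). Qed.

Lemma d_line s t x : derivable_pt_lim (fun y => s * y + t) x s.
Proof.
  pose proof (d_aff (fun y => y) x 1 s t (derivable_pt_lim_id x)) as H.
  rewrite Rmult_1_r in H. exact H.
Qed.

Lemma sh_dneg f f' : strongly_hyperbolic f ->
  (forall x, 0 < x -> derivable_pt_lim f x (f' x)) -> forall x, 0 < x -> f' x < 0.
Proof.
  intros H Hd x Hx. destruct (Rlt_dec (f' x) 0) as [|Hn]; auto. exfalso.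
  apply Rnot_lt_le in Hn.
  assert (Ht := tangent (fun x => 0 < x) f x (x + 1) (f' x) (sh_conv f H)
    ltac:(intros; lra) Hx ltac:(lra) ltac:(lra) (Hd x Hx)).
  assert (Hdc := sh_dec f H x (x + 1) Hx ltac:(lra)). nra.
Qed.

Lemma chord_key phi x y z : strictly_convex_pos phi -> 0 < x -> x < y -> y < z ->
  (z - x) * phi y < (z - y) * phi x + (y - x) * phi z.
Proof.
  intros Hc Hx Hxy Hyz. set (t := (z - y) / (z - x)).
  assert (Ht0 : 0 < t) by (unfold t; apply Rdiv_lt_0_compat; lra).
  assert (Ht1 : t < 1) by (unfold t; apply (Rmult_lt_reg_r (z - x)); [lra|];
      unfold Rdiv; rewrite Rmult_assoc, Rinv_l; lra).
  assert (H := Hc x z t Hx ltac:(lra) ltac:(lra) ltac:(lra)).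
  replace (t * x + (1 - t) * z) with y in H by (unfold t; field; lra).
  apply (Rmult_lt_compat_l (z - x)) in H; [|lra].
  replace ((z - x) * (t * phi x + (1 - t) * phi z)) with
    ((z - y) * phi x + (y - x) * phi z) in H by (unfold t; field; lra).
  exact H.
Qed.

Lemma incr phi d v0 v : strictly_convex_pos phi -> 0 < d -> 0 < v0 -> v0 < v ->
  phi (v0 + d) - phi v0 < phi (v + d) - phi v.
Proof.
  intros Hc Hd Hv0 Hv.
  assert (K1 := chord_key phi v0 (v0 + d) (v + d) Hc Hv0 ltac:(lra) ltac:(lra)).
  assert (K2 := chord_key phi v0 v (v + d) Hc Hv0 ltac:(lra) ltac:(lra)).
  set (L := v + d - v0). assert (HL : 0 < L) by (unfold L; lra).
  apply (Rmult_lt_reg_l L); auto.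
  replace (v + d - v0) with L in K1, K2 by (unfold L; ring).
  replace (v + d - (v0 + d)) with (v - v0) in K1 by ring.
  replace (v0 + d - v0) with d in K1 by ring.
  replace (v + d - v) with d in K2 by ring.
  replace (L * (phi (v0 + d) - phi v0)) with (L * phi (v0 + d) - ((v - v0) + d) * phi v0)
    by (unfold L; ring).
  replace (L * (phi (v + d) - phi v)) with ((d + (v - v0)) * phi (v + d) - L * phi v)
    by (unfold L; ring).
  lra.
Qed.

Definition kf (f : R -> R) (al be d v : R) : R := al * f (v + d) - be * f v.

Lemma kf_deriv f f' al be d v : (forall x, 0 < x -> derivable_pt_lim f x (f' x)) ->
  0 < d -> 0 < v -> derivable_pt_lim (kf f al be d) v (al * f' (v + d) - be * f' v).
Proof.
  intros Hd Hd0 Hv. unfold kf.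
  apply (derivable_pt_lim_minus (fun y => al * f (y + d)) (fun y => be * f y)).
  - apply (derivable_pt_lim_scal (fun y => f (y + d))). apply d_shift. apply Hd. lra.
  - apply (derivable_pt_lim_scal f). apply Hd. lra.
Qed.

Lemma kder_signs f f' al be d v0 : strongly_hyperbolic f ->
  (forall x, 0 < x -> derivable_pt_lim f x (f' x)) ->
  strictly_convex_pos (fun x => ln (Rabs (f' x))) ->
  0 < al -> 0 < be -> 0 < d -> 0 < v0 -> al * f' (v0 + d) = be * f' v0 ->
  (forall v, v0 < v -> al * f' (v + d) - be * f' v < 0) /\
  (forall v, 0 < v < v0 -> 0 < al * f' (v + d) - be * f' v).
Proof.
  intros H Hd Hc Hal Hbe Hd0 Hv0 Heq.
  assert (Hn := sh_dneg f f' H Hd).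
  assert (Habs : forall x, 0 < x -> Rabs (f' x) = - f' x)
    by (intros x Hx; apply Rabs_left; auto).
  assert (Hpos : forall x, 0 < x -> 0 < Rabs (f' x))
    by (intros x Hx; rewrite Habs; auto; specialize (Hn x Hx); lra).
  assert (E0' : ln al + ln (Rabs (f' (v0 + d))) = ln be + ln (Rabs (f' v0))).
  { rewrite <- !ln_mult; auto; try apply Hpos; try lra.
    f_equal. rewrite !Habs by lra. lra. }
  split.
  - intros v Hv.
    assert (I := incr _ d v0 v Hc Hd0 Hv0 Hv). simpl in I.
    assert (L : ln (be * Rabs (f' v)) < ln (al * Rabs (f' (v + d)))).
    { rewrite !ln_mult; auto; try apply Hpos; lra. }
    apply ln_lt_inv in L; try (apply Rmult_lt_0_compat; auto; apply Hpos; lra).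
    rewrite !Habs in L by lra. lra.
  - intros v Hv.
    assert (I := incr _ d v v0 Hc Hd0 ltac:(lra) ltac:(lra)). simpl in I.
    assert (L : ln (al * Rabs (f' (v + d))) < ln (be * Rabs (f' v))).
    { rewrite !ln_mult; auto; try apply Hpos; lra. }
    apply ln_lt_inv in L; try (apply Rmult_lt_0_compat; auto; apply Hpos; lra).
    rewrite !Habs in L by lra. lra.
Qed.

Lemma UL f f' al be d v0 : strongly_hyperbolic f ->
  (forall x, 0 < x -> derivable_pt_lim f x (f' x)) ->
  strictly_convex_pos (fun x => ln (Rabs (f' x))) ->
  0 < al -> 0 < be -> 0 < d -> 0 < v0 -> al * f' (v0 + d) = be * f' v0 ->
  (forall v, 0 < v -> v <> v0 -> kf f al be d v < kf f al be d v0) /\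
  0 < kf f al be d v0.
Proof.
  intros H Hd Hc Hal Hbe Hd0 Hv0 Heq.
  destruct (kder_signs f f' al be d v0 H Hd Hc Hal Hbe Hd0 Hv0 Heq) as [Sn Sp].
  assert (Dec : forall v1 v2, v0 <= v1 -> v1 < v2 -> kf f al be d v2 < kf f al be d v1).
  { intros v1 v2 H1 H2.
    destruct (MVT_cor2 (kf f al be d) (fun v => al * f' (v + d) - be * f' v) v1 v2 H2)
      as [c [Hc1 Hc2]].
    - intros c Hc'. apply kf_deriv; auto; lra.
    - pose proof (Sn c ltac:(lra)). nra. }
  assert (Inc : forall v1 v2, 0 < v1 -> v1 < v2 -> v2 <= v0 -> kf f al be d v1 < kf f al be d v2).
  { intros v1 v2 H1 H2 H3.
    destruct (MVT_cor2 (kf f al be d) (fun v => al * f' (v + d) - be * f' v) v1 v2 H2)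
      as [c [Hc1 Hc2]].
    - intros c Hc'. apply kf_deriv; auto; lra.
    - pose proof (Sp c ltac:(lra)). nra. }
  split.
  - intros v Hv Hne. destruct (Rlt_dec v v0).
    + apply Inc; lra.
    + apply Dec; lra.
  - destruct (Rlt_dec 0 (kf f al be d v0)) as [|Hn]; auto. exfalso.
    apply Rnot_lt_le in Hn.
    assert (H1 := Dec v0 (v0 + 1) ltac:(lra) ltac:(lra)).
    set (e := - kf f al be d (v0 + 1)).
    destruct (Einf f H (e / be) (v0 + 1)) as [v [Hv1 [Hv2 Hv3]]].
    { unfold e. apply Rdiv_lt_0_compat; lra. }
    assert (H2 := Dec (v0 + 1) v ltac:(lra) Hv1).
    assert (Hp := sh_pos f H (v + d) ltac:(lra)).
    unfold kf in H2 at 1.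
    assert (be * f v < e).
    { apply (Rmult_lt_compat_l be) in Hv3; auto.
      replace (be * (e / be)) with e in Hv3 by (field; lra). auto. }
    unfold e in *. nra.
Qed.

Lemma kf_cont f f' al be d v : (forall x, 0 < x -> derivable_pt_lim f x (f' x)) ->
  0 < d -> 0 < v -> continuity_pt (kf f al be d) v.
Proof. intros Hd Hd0 Hv. eapply dcont. apply kf_deriv; eauto. Qed.

Lemma zero_exist1 f f' ga al be d : strongly_hyperbolic f ->
  (forall x, 0 < x -> derivable_pt_lim f x (f' x)) ->
  0 < ga -> 0 < al -> 0 < be -> 0 < d ->
  exists v, 0 < v /\ ga + kf f al be d v = 0.
Proof.
  intros H Hd Hg Hal Hbe Hd0.
  destruct (E0 f H ((ga + al * f d) / be) 1 ltac:(lra)) as [v1 [Hv1 Hf1]].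
  destruct (Einf f H (ga / be) v1) as [v2 [Hv2 [Hv2' Hf2]]].
  { apply Rdiv_lt_0_compat; lra. }
  destruct (ivt_up (fun v => ga + kf f al be d v) v1 v2) as [z [Hz Hz0]]; auto.
  - intros x Hx. apply continuity_pt_plus. apply continuity_pt_const. intros ? ?; auto.
    eapply kf_cont; eauto; lra.
  - unfold kf. assert (f (v1 + d) < f d) by (apply sh_dec; auto; lra).
    apply (Rmult_lt_compat_l be) in Hf1; auto.
    replace (be * ((ga + al * f d) / be)) with (ga + al * f d) in Hf1 by (field; lra).
    nra.
  - unfold kf. assert (0 < f (v2 + d)) by (apply sh_pos; auto; lra).
    apply (Rmult_lt_compat_l be) in Hf2; auto.
    replace (be * (ga / be)) with ga in Hf2 by (field; lra). nra.
  - exists z. split; auto; lra.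
Qed.

Lemma zero_exist2 f f' al be d : strongly_hyperbolic f ->
  (forall x, 0 < x -> derivable_pt_lim f x (f' x)) ->
  0 < be -> be < al -> 0 < d ->
  exists v, 0 < v /\ kf f al be d v = 0.
Proof.
  intros H Hd Hbe Hal Hd0.
  destruct (E0 f H ((al * f d) / be) 1 ltac:(lra)) as [v1 [Hv1 Hf1]].
  destruct (sh_ratio f H d (1 - be / al)) as [N HN].
  { assert (be / al < 1) by (apply (Rmult_lt_reg_r al); [lra|]; unfold Rdiv;
      rewrite Rmult_assoc, Rinv_l; lra). lra. }
  set (v2 := Rmax N v1 + 1).
  assert (N <= Rmax N v1) by apply Rmax_l. assert (v1 <= Rmax N v1) by apply Rmax_r.
  specialize (HN v2 ltac:(unfold v2; lra) ltac:(unfold v2; lra) ltac:(unfold v2; lra)).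
  destruct (ivt_up (kf f al be d) v1 v2) as [z [Hz Hz0]]; auto.
  - unfold v2; lra.
  - intros x Hx. eapply kf_cont; eauto; unfold v2 in *; lra.
  - unfold kf. assert (f (v1 + d) < f d) by (apply sh_dec; auto; lra).
    apply (Rmult_lt_compat_l be) in Hf1; auto.
    replace (be * ((al * f d) / be)) with (al * f d) in Hf1 by (field; lra).
    nra.
  - unfold kf. assert (Hp : 0 < f v2) by (apply sh_pos; auto; unfold v2; lra).
    apply Rabs_def2 in HN. destruct HN as [_ HN].
    assert (be / al < f (v2 + d) / f v2) by lra.
    apply (Rmult_lt_compat_l (al * f v2)) in H2; [|nra].
    replace (al * f v2 * (be / al)) with (be * f v2) in H2 by (field; lra).
    replace (al * f v2 * (f (v2 + d) / f v2)) with (al * f (v2 + d)) in H2 by (field; lra).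
    lra.
  - exists z. split; auto; lra.
Qed.

Lemma surj f f' y : strongly_hyperbolic f ->
  (forall x, 0 < x -> derivable_pt_lim f x (f' x)) -> 0 < y ->
  exists u, 0 < u /\ f u = y.
Proof.
  intros H Hd Hy.
  destruct (E0 f H y 1 ltac:(lra)) as [v1 [Hv1 Hf1]].
  destruct (Einf f H y v1 Hy) as [v2 [Hv2 [Hv2' Hf2]]].
  destruct (ivt_down (fun u => f u - y) v1 v2) as [z [Hz Hz0]]; auto; try lra.
  - intros x Hx. apply continuity_pt_minus. eapply dcont; apply Hd; lra.
    apply continuity_pt_const. intros ? ?; auto.
  - exists z. split; lra.
Qed.

Definition slopeF (f1' f2' : R -> R) (a b x : R) : R :=
  if Rlt_dec (- b) x then a * f1' (x + b) else a * f2' (- x - b).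

Lemma fabc_R f1 f2 a b c x : - b < x -> fabc f1 f2 a b c x = a * f1 (x + b) + c.
Proof. intros H. unfold fabc. destruct (Rlt_dec (- b) x); [auto| lra]. Qed.
Lemma fabc_L f1 f2 a b c x : x < - b -> fabc f1 f2 a b c x = - a * f2 (- x - b) + c.
Proof. intros H. unfold fabc. destruct (Rlt_dec (- b) x); [lra| auto]. Qed.
Lemma slope_R f1' f2' a b x : - b < x -> slopeF f1' f2' a b x = a * f1' (x + b).
Proof. intros H. unfold slopeF. destruct (Rlt_dec (- b) x); [auto| lra]. Qed.
Lemma slope_L f1' f2' a b x : x < - b -> slopeF f1' f2' a b x = a * f2' (- x - b).
Proof. intros H. unfold slopeF. destruct (Rlt_dec (- b) x); [lra| auto]. Qed.

Lemma fbar_fin f1 f2 a b c x y : fbar f1 f2 a b c (Some x, Some y) ->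
  x <> - b /\ y = fabc f1 f2 a b c x.
Proof.
  intros [[x' [H1 H2]] | [H | H]]; try discriminate.
  inversion H2; subst. auto.
Qed.
Lemma fbar_fin_i f1 f2 a b c x : x <> - b ->
  fbar f1 f2 a b c (Some x, Some (fabc f1 f2 a b c x)).
Proof. intros H. left. exists x. auto. Qed.
Lemma fbar_SN f1 f2 a b c x : fbar f1 f2 a b c (Some x, None) -> x = - b.
Proof. intros [[x' [H1 H2]] | [H | H]]; try discriminate. inversion H; auto. Qed.
Lemma fbar_SN_i f1 f2 a b c : fbar f1 f2 a b c (Some (- b), None).
Proof. right; left; auto. Qed.
Lemma fbar_NS f1 f2 a b c y : fbar f1 f2 a b c (None, Some y) -> y = c.
Proof. intros [[x' [H1 H2]] | [H | H]]; try discriminate. inversion H; auto. Qed.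
Lemma fbar_NS_i f1 f2 a b c : fbar f1 f2 a b c (None, Some c).
Proof. right; right; auto. Qed.
Lemma fbar_NN f1 f2 a b c : ~ fbar f1 f2 a b c (None, None).
Proof. intros [[x' [H1 H2]] | [H | H]]; discriminate. Qed.
Lemma lbar_fin s t x y : lbar s t (Some x, Some y) -> y = s * x + t.
Proof. intros [[x' H] | H]; try discriminate. inversion H; auto. Qed.
Lemma lbar_fin_i s t x : lbar s t (Some x, Some (s * x + t)).
Proof. left. exists x. auto. Qed.
Lemma lbar_NN_i s t : lbar s t (None, None).
Proof. right. auto. Qed.
Lemma lbar_SN s t x : ~ lbar s t (Some x, None).
Proof. intros [[x' H] | H]; discriminate. Qed.
Lemma lbar_NS s t y : ~ lbar s t (None, Some y).
Proof. intros [[x' H] | H]; discriminate. Qed.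

Lemma fR_gt f1 f2 a b c x : strongly_hyperbolic f1 -> 0 < a -> - b < x ->
  c < fabc f1 f2 a b c x.
Proof.
  intros H Ha Hx. rewrite fabc_R by auto.
  assert (0 < f1 (x + b)) by (apply sh_pos; auto; lra). nra.
Qed.
Lemma fL_lt f1 f2 a b c x : strongly_hyperbolic f2 -> 0 < a -> x < - b ->
  fabc f1 f2 a b c x < c.
Proof.
  intros H Ha Hx. rewrite fabc_L by auto.
  assert (0 < f2 (- x - b)) by (apply sh_pos; auto; lra). nra.
Qed.
Lemma fR_dec f1 f2 a b c x y : strongly_hyperbolic f1 -> 0 < a -> - b < x -> x < y ->
  fabc f1 f2 a b c y < fabc f1 f2 a b c x.
Proof.
  intros H Ha Hx Hy. rewrite !fabc_R by lra.
  assert (f1 (y + b) < f1 (x + b)) by (apply sh_dec; auto; lra). nra.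
Qed.
Lemma fL_dec f1 f2 a b c x y : strongly_hyperbolic f2 -> 0 < a -> x < y -> y < - b ->
  fabc f1 f2 a b c y < fabc f1 f2 a b c x.
Proof.
  intros H Ha Hx Hy. rewrite !fabc_L by lra.
  assert (f2 (- x - b) < f2 (- y - b)) by (apply sh_dec; auto; lra). nra.
Qed.

Lemma dR f1 f1' a b c x : (forall x, 0 < x -> derivable_pt_lim f1 x (f1' x)) -> - b < x ->
  derivable_pt_lim (fun y => a * f1 (y + b) + c) x (a * f1' (x + b)).
Proof.
  intros Hd Hx. apply (d_aff (fun y => f1 (y + b))). apply d_shift. apply Hd. lra.
Qed.
Lemma dL f2 f2' a b c x : (forall x, 0 < x -> derivable_pt_lim f2 x (f2' x)) -> x < - b ->
  derivable_pt_lim (fun y => - a * f2 (- y - b) + c) x (a * f2' (- x - b)).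
Proof.
  intros Hd Hx. replace (a * f2' (- x - b)) with (- a * - f2' (- x - b)) by ring.
  apply (d_aff (fun y => f2 (- y - b))). apply d_refl. apply Hd. lra.
Qed.
Lemma dnL f2 f2' a b c x : (forall x, 0 < x -> derivable_pt_lim f2 x (f2' x)) -> x < - b ->
  derivable_pt_lim (fun y => a * f2 (- y - b) - c) x (- (a * f2' (- x - b))).
Proof.
  intros Hd Hx. replace (- (a * f2' (- x - b))) with (a * - f2' (- x - b)) by ring.
  apply (d_aff (fun y => f2 (- y - b))). apply d_refl. apply Hd. lra.
Qed.

Lemma cR f1 a b c : strictly_convex_pos f1 -> 0 < a ->
  sconv (fun x => - b < x) (fun y => a * f1 (y + b) + c).
Proof.
  intros Hc Ha u w t Hu Hw Hne Ht.
  assert (H := Hc (u + b) (w + b) t ltac:(lra) ltac:(lra) ltac:(lra) Ht).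
  replace (t * (u + b) + (1 - t) * (w + b)) with (t * u + (1 - t) * w + b) in H by ring.
  nra.
Qed.
Lemma cnL f2 a b c : strictly_convex_pos f2 -> 0 < a ->
  sconv (fun x => x < - b) (fun y => a * f2 (- y - b) - c).
Proof.
  intros Hc Ha u w t Hu Hw Hne Ht.
  assert (H := Hc (- u - b) (- w - b) t ltac:(lra) ltac:(lra) ltac:(lra) Ht).
  replace (t * (- u - b) + (1 - t) * (- w - b)) with (- (t * u + (1 - t) * w) - b) in H by ring.
  nra.
Qed.
Lemma cI2 f1 f2 a b c a' b' c' : strictly_convex_pos f1 -> strictly_convex_pos f2 ->
  0 < a -> 0 < a' ->
  sconv (fun x => - b < x /\ x < - b')
    (fun y => (a * f1 (y + b) + c) - (- a' * f2 (- y - b') + c')).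
Proof.
  intros Hc1 Hc2 Ha Ha' u w t Hu Hw Hne Ht.
  assert (H1 := cR f1 a b 0 Hc1 Ha u w t ltac:(simpl; lra) ltac:(simpl; lra) Hne Ht).
  assert (H2 := cnL f2 a' b' 0 Hc2 Ha' u w t ltac:(simpl; lra) ltac:(simpl; lra) Hne Ht).
  simpl in H1, H2. lra.
Qed.

Lemma common_fin (X Y : Pt -> Prop) x0 y0 z y :
  (forall w, X w -> Y w -> w = (Some x0, Some y0)) -> X (Some z, Some y) -> Y (Some z, Some y) ->
  z = x0 /\ y = y0.
Proof. intros H H1 H2. specialize (H _ H1 H2). inversion H. auto. Qed.

Lemma mul_div_lt a K y : 0 < a -> K / a < y -> K < a * y.
Proof.
  intros Ha H. apply (Rmult_lt_compat_l a) in H; auto.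
  replace (a * (K / a)) with K in H by (field; lra). auto.
Qed.

Lemma A_LF f1 f2 f1' f2' s t a b c x0 :
  strongly_hyperbolic f1 -> strongly_hyperbolic f2 ->
  (forall x, 0 < x -> derivable_pt_lim f1 x (f1' x)) ->
  (forall x, 0 < x -> derivable_pt_lim f2 x (f2' x)) ->
  s < 0 -> 0 < a -> x0 <> - b -> fabc f1 f2 a b c x0 = s * x0 + t ->
  (forall z, lbar s t z -> fbar f1 f2 a b c z -> z = (Some x0, Some (s * x0 + t))) ->
  s = slopeF f1' f2' a b x0.
Proof.
  intros H1 H2 Hd1 Hd2 Hs Ha Hx0 Hp Ht.
  destruct (Req_dec s (slopeF f1' f2' a b x0)) as [|Hne]; auto. exfalso.
  destruct (Rlt_dec (- b) x0) as [Hr|Hl'].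
  - rewrite slope_R in Hne by auto. rewrite fabc_R in Hp by auto.
    destruct (E0 f1 H1 ((t - c - s * b) / a) (x0 + b) ltac:(lra)) as [w [Hw Hfw]].
    apply mul_div_lt in Hfw; auto.
    set (Xr := Rmax x0 ((t - c) / - s) + 1).
    assert (x0 <= Rmax x0 ((t - c) / - s)) by apply Rmax_l.
    assert (Hq : (t - c) / - s <= Rmax x0 ((t - c) / - s)) by apply Rmax_r.
    destruct (cross_pos (fun x => (a * f1 (x + b) + c) - (s * x + t)) (- b + w) x0 Xr
      (a * f1' (x0 + b) - s)) as [z [Hz1 [Hz2 Hz3]]].
    + unfold Xr; lra.
    + intros x Hx. eapply dcont. apply d_minus. apply dR; auto. unfold Xr in *; lra.
      apply d_line.
    + simpl. lra.
    + apply d_minus. apply dR; auto. apply d_line.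
    + lra.
    + simpl. replace (- b + w + b) with w by ring. nra.
    + simpl. assert (0 < f1 (Xr + b)) by (apply sh_pos; auto; unfold Xr; lra).
      assert (Hq' : t - c < - s * Xr).
      { apply (mul_div_lt (- s)); [lra|]. unfold Xr; lra. }
      nra.
    + assert (Hzb : z <> - b) by lra.
      destruct (common_fin _ _ x0 (s * x0 + t) z (s * z + t) Ht (lbar_fin_i s t z)) as [E _].
      * assert (Hf := fbar_fin_i f1 f2 a b c z Hzb). rewrite fabc_R in Hf by lra.
        replace (a * f1 (z + b) + c) with (s * z + t) in Hf by (simpl in Hz3; lra). exact Hf.
      * auto.
  - assert (Hl : x0 < - b) by lra.
    rewrite slope_L in Hne by auto. rewrite fabc_L in Hp by auto.
    destruct (E0 f2 H2 ((c + s * b - t) / a) (- b - x0) ltac:(lra)) as [w [Hw Hfw]].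
    apply mul_div_lt in Hfw; auto.
    set (Xl := Rmin x0 ((t - c) / - s) - 1).
    assert (Rmin x0 ((t - c) / - s) <= x0) by apply Rmin_l.
    assert (Hq : Rmin x0 ((t - c) / - s) <= (t - c) / - s) by apply Rmin_r.
    destruct (cross_neg (fun x => (- a * f2 (- x - b) + c) - (s * x + t)) Xl x0 (- b - w)
      (a * f2' (- x0 - b) - s)) as [z [Hz1 [Hz2 Hz3]]].
    + unfold Xl; lra.
    + intros x Hx. eapply dcont. apply d_minus. apply dL; auto. unfold Xl in *; lra.
      apply d_line.
    + simpl. lra.
    + apply d_minus. apply dL; auto. apply d_line.
    + lra.
    + simpl. assert (0 < f2 (- Xl - b)) by (apply sh_pos; auto; unfold Xl; lra).
      assert (Hq' : - s * Xl < t - c).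
      { assert (HH : - s * Xl < - s * ((t - c) / - s)) by (apply Rmult_lt_compat_l; unfold Xl; lra).
        replace (- s * ((t - c) / - s)) with (t - c) in HH by (field; lra). auto. }
      nra.
    + simpl. replace (- (- b - w) - b) with w by ring. nra.
    + assert (Hzb : z <> - b) by lra.
      destruct (common_fin _ _ x0 (s * x0 + t) z (s * z + t) Ht (lbar_fin_i s t z)) as [E _].
      * assert (Hf := fbar_fin_i f1 f2 a b c z Hzb). rewrite fabc_L in Hf by lra.
        replace (- a * f2 (- z - b) + c) with (s * z + t) in Hf by (simpl in Hz3; lra). exact Hf.
      * auto.
Qed.

Lemma ff_common f1 f2 a b c a' b' c' x0 y0 z :
  (forall w, fbar f1 f2 a b c w -> fbar f1 f2 a' b' c' w -> w = (Some x0, Some y0)) ->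
  z <> - b -> z <> - b' -> fabc f1 f2 a b c z = fabc f1 f2 a' b' c' z -> z = x0.
Proof.
  intros Ht H1 H2 He.
  assert (A := fbar_fin_i f1 f2 a b c z H1).
  assert (B := fbar_fin_i f1 f2 a' b' c' z H2). rewrite <- He in B.
  destruct (common_fin _ _ x0 y0 z _ Ht A B). auto.
Qed.

Lemma A_FF_ord f1 f2 f1' f2' a b c a' b' c' x0 y0 :
  strongly_hyperbolic f1 -> strongly_hyperbolic f2 ->
  (forall x, 0 < x -> derivable_pt_lim f1 x (f1' x)) ->
  (forall x, 0 < x -> derivable_pt_lim f2 x (f2' x)) ->
  0 < a -> 0 < a' -> b' < b -> x0 <> - b -> x0 <> - b' ->
  y0 = fabc f1 f2 a b c x0 -> y0 = fabc f1 f2 a' b' c' x0 ->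
  (forall z, fbar f1 f2 a b c z -> fbar f1 f2 a' b' c' z -> z = (Some x0, Some y0)) ->
  slopeF f1' f2' a b x0 = slopeF f1' f2' a' b' x0.
Proof.
  intros H1 H2 Hd1 Hd2 Ha Ha' Hbb Hx1 Hx2 Hp1 Hp2 Ht.
  destruct (Req_dec (slopeF f1' f2' a b x0) (slopeF f1' f2' a' b' x0)) as [|Hne]; auto.
  exfalso. set (d := b - b'). assert (Hd : 0 < d) by (unfold d; lra).
  destruct (Rtotal_order c c') as [Hc | [Hc | Hc]].
  2:{ subst c'. specialize (Ht _ (fbar_NS_i f1 f2 a b c) (fbar_NS_i f1 f2 a' b' c)).
      discriminate. }
  2:{ destruct (zero_exist1 f1 f1' (c - c') a a' d H1 Hd1 ltac:(lra) Ha Ha' Hd)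
        as [v [Hv Hv0]].
      destruct (zero_exist1 f2 f2' (c - c') a' a d H2 Hd2 ltac:(lra) Ha' Ha Hd)
        as [u [Hu Hu0]].
      unfold kf in Hv0, Hu0.
      assert (E3 : v - b' = x0).
      { apply (ff_common f1 f2 a b c a' b' c' x0 y0); auto; try lra.
        rewrite !fabc_R by lra. replace (v - b' + b) with (v + d) by (unfold d; ring).
        replace (v - b' + b') with v by ring. lra. }
      assert (E1 : - u - b = x0).
      { apply (ff_common f1 f2 a b c a' b' c' x0 y0); auto; try lra.
        rewrite !fabc_L by lra. replace (- (- u - b) - b') with (u + d) by (unfold d; ring).
        replace (- (- u - b) - b) with u by ring. lra. }
      lra. }
  destruct (Rlt_dec (- b') x0) as [HI3 | HI3'].
  - rewrite !slope_R in Hne by lra. rewrite !fabc_R in Hp1, Hp2 by lra.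
    destruct (E0 f1 H1 (((c - c') + a * f1 d) / a') (x0 + b') ltac:(lra)) as [w [Hw Hfw]].
    apply mul_div_lt in Hfw; auto.
    destruct (Einf f1 H1 ((c' - c) / a) (x0 + b')) as [v [Hv [Hv' Hfv]]].
    { apply Rdiv_lt_0_compat; lra. }
    assert (Hfv' : a * f1 v < c' - c).
    { apply (Rmult_lt_compat_l a) in Hfv; auto.
      replace (a * ((c' - c) / a)) with (c' - c) in Hfv by (field; lra). auto. }
    destruct (cross_neg (fun x => (a * f1 (x + b) + c) - (a' * f1 (x + b') + c'))
      (- b' + w) x0 (v - b') (a * f1' (x0 + b) - a' * f1' (x0 + b'))) as [z [Hz1 [Hz2 Hz3]]].
    + lra.
    + intros x Hx. eapply dcont. apply d_minus; apply dR; auto; lra.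
    + simpl. lra.
    + apply d_minus; apply dR; auto; lra.
    + lra.
    + simpl. replace (- b' + w + b) with (w + d) by (unfold d; ring).
      replace (- b' + w + b') with w by ring.
      assert (f1 (w + d) < f1 d) by (apply sh_dec; auto; lra). nra.
    + simpl. replace (v - b' + b) with (v + d) by (unfold d; ring).
      replace (v - b' + b') with v by ring.
      assert (f1 (v + d) < f1 v) by (apply sh_dec; auto; lra).
      assert (0 < f1 v) by (apply sh_pos; auto). nra.
    + apply Hz2. apply (ff_common f1 f2 a b c a' b' c' x0 y0); auto; try lra.
      rewrite !fabc_R by lra. simpl in Hz3. lra.
  - destruct (Rlt_dec x0 (- b)) as [HI1 | HI2].
    + rewrite !slope_L in Hne by lra. rewrite !fabc_L in Hp1, Hp2 by lra.
      destruct (E0 f2 H2 (((c - c') + a' * f2 d) / a) (- b - x0) ltac:(lra)) as [w [Hw Hfw]].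
      apply mul_div_lt in Hfw; auto.
      destruct (Einf f2 H2 ((c' - c) / a') (- x0 - b)) as [u [Hu [Hu' Hfu]]].
      { apply Rdiv_lt_0_compat; lra. }
      assert (Hfu' : a' * f2 u < c' - c).
      { apply (Rmult_lt_compat_l a') in Hfu; auto.
        replace (a' * ((c' - c) / a')) with (c' - c) in Hfu by (field; lra). auto. }
      destruct (cross_neg (fun x => (- a * f2 (- x - b) + c) - (- a' * f2 (- x - b') + c'))
        (- b - u) x0 (- b - w) (a * f2' (- x0 - b) - a' * f2' (- x0 - b'))) as [z [Hz1 [Hz2 Hz3]]].
      * lra.
      * intros x Hx. eapply dcont. apply d_minus; apply dL; auto; lra.
      * simpl. lra.
      * apply d_minus; apply dL; auto; lra.
      * lra.
      * simpl. replace (- (- b - u) - b') with (u + d) by (unfold d; ring).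
        replace (- (- b - u) - b) with u by ring.
        assert (f2 (u + d) < f2 u) by (apply sh_dec; auto; lra).
        assert (0 < f2 u) by (apply sh_pos; auto). nra.
      * simpl. replace (- (- b - w) - b') with (w + d) by (unfold d; ring).
        replace (- (- b - w) - b) with w by ring.
        assert (f2 (w + d) < f2 d) by (apply sh_dec; auto; lra). nra.
      * apply Hz2. apply (ff_common f1 f2 a b c a' b' c' x0 y0); auto; try lra.
        rewrite !fabc_L by lra. simpl in Hz3. lra.
    + assert (HI2' : - b < x0) by lra. assert (HI3 : x0 < - b') by lra.
      rewrite slope_R in Hne by lra. rewrite slope_L in Hne by lra.
      rewrite fabc_R in Hp1 by lra. rewrite fabc_L in Hp2 by lra.
      destruct (E0 f1 H1 ((c' - c) / a) (x0 + b) ltac:(lra)) as [w [Hw Hfw]].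
      apply mul_div_lt in Hfw; auto.
      destruct (E0 f2 H2 ((c' - c) / a') (- b' - x0) ltac:(lra)) as [w' [Hw' Hfw']].
      apply mul_div_lt in Hfw'; auto.
      destruct (cross_pos (fun x => (a * f1 (x + b) + c) - (- a' * f2 (- x - b') + c'))
        (- b + w) x0 (- b' - w') (a * f1' (x0 + b) - a' * f2' (- x0 - b'))) as [z [Hz1 [Hz2 Hz3]]].
      * lra.
      * intros x Hx. eapply dcont. apply d_minus. apply dR; auto; lra. apply dL; auto; lra.
      * simpl. lra.
      * apply d_minus. apply dR; auto; lra. apply dL; auto; lra.
      * lra.
      * simpl. replace (- b + w + b) with w by ring.
        assert (0 < f2 (- (- b + w) - b')) by (apply sh_pos; auto; lra). nra.
      * simpl. replace (- (- b' - w') - b') with w' by ring.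
        assert (0 < f1 (- b' - w' + b)) by (apply sh_pos; auto; lra). nra.
      * apply Hz2. apply (ff_common f1 f2 a b c a' b' c' x0 y0); auto; try lra.
        rewrite fabc_R by lra. rewrite fabc_L by lra. simpl in Hz3. lra.
Qed.

Lemma A_FF f1 f2 f1' f2' a b c a' b' c' x0 y0 :
  strongly_hyperbolic f1 -> strongly_hyperbolic f2 ->
  (forall x, 0 < x -> derivable_pt_lim f1 x (f1' x)) ->
  (forall x, 0 < x -> derivable_pt_lim f2 x (f2' x)) ->
  0 < a -> 0 < a' -> x0 <> - b -> x0 <> - b' ->
  y0 = fabc f1 f2 a b c x0 -> y0 = fabc f1 f2 a' b' c' x0 ->
  (forall z, fbar f1 f2 a b c z -> fbar f1 f2 a' b' c' z -> z = (Some x0, Some y0)) ->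
  slopeF f1' f2' a b x0 = slopeF f1' f2' a' b' x0.
Proof.
  intros H1 H2 Hd1 Hd2 Ha Ha' Hx1 Hx2 Hp1 Hp2 Ht.
  destruct (Rtotal_order b' b) as [Hb | [Hb | Hb]].
  - exact (A_FF_ord f1 f2 f1' f2' a b c a' b' c' x0 y0 H1 H2 Hd1 Hd2 Ha Ha' Hb Hx1 Hx2 Hp1 Hp2 Ht).
  - subst b'. specialize (Ht _ (fbar_SN_i f1 f2 a b c) (fbar_SN_i f1 f2 a' b c')).
    discriminate.
  - symmetry. exact (A_FF_ord f1 f2 f1' f2' a' b' c' a b c x0 y0 H1 H2 Hd1 Hd2 Ha' Ha Hb Hx2 Hx1 Hp2 Hp1
      (fun z h1 h2 => Ht z h2 h1)).
Qed.

Lemma B_LF f1 f2 f1' f2' s t a b c x0 y0 q :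
  strongly_hyperbolic f1 -> strongly_hyperbolic f2 ->
  (forall x, 0 < x -> derivable_pt_lim f1 x (f1' x)) ->
  (forall x, 0 < x -> derivable_pt_lim f2 x (f2' x)) ->
  s < 0 -> 0 < a -> x0 <> - b -> y0 = s * x0 + t -> y0 = fabc f1 f2 a b c x0 ->
  s = slopeF f1' f2' a b x0 ->
  lbar s t q -> fbar f1 f2 a b c q -> q <> (Some x0, Some y0) -> False.
Proof.
  intros H1 H2 Hd1 Hd2 Hs Ha Hx0 Hp1 Hp2 Hsl Hq1 Hq2 Hqp.
  destruct q as [[z|] [y|]].
  - apply lbar_fin in Hq1. apply fbar_fin in Hq2. destruct Hq2 as [Hzb Hy].
    destruct (Req_dec z x0) as [Hz|Hz].
    { subst z. apply Hqp. f_equal. f_equal. lra. }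
    destruct (Rlt_dec (- b) x0) as [Hr|Hl'].
    + rewrite slope_R in Hsl by auto.
      destruct (Rlt_dec (- b) z) as [Hzr|Hzl].
      * assert (T := tangent (fun x => - b < x) (fun y => a * f1 (y + b) + c) x0 z s
          (cR f1 a b c (sh_conv f1 H1) Ha) ltac:(intros; lra) Hr Hzr Hz
          ltac:(rewrite Hsl; apply dR; auto)).
        simpl in T. rewrite fabc_R in Hp2, Hy by auto. lra.
      * assert (fabc f1 f2 a b c z < c) by (apply fL_lt; auto; lra).
        assert (c < fabc f1 f2 a b c x0) by (apply fR_gt; auto).
        assert (s * x0 < s * z) by nra. lra.
    + assert (Hl : x0 < - b) by lra. rewrite slope_L in Hsl by auto.
      destruct (Rlt_dec z (- b)) as [Hzl|Hzr].
      * assert (T := tangent (fun x => x < - b) (fun y => a * f2 (- y - b) - c) x0 z (- s)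
          (cnL f2 a b c (sh_conv f2 H2) Ha) ltac:(intros; lra) Hl Hzl Hz
          ltac:(rewrite Hsl; apply dnL; auto)).
        simpl in T. rewrite fabc_L in Hp2, Hy by auto. lra.
      * assert (c < fabc f1 f2 a b c z) by (apply fR_gt; auto; lra).
        assert (fabc f1 f2 a b c x0 < c) by (apply fL_lt; auto).
        assert (s * z < s * x0) by nra. lra.
  - exact (lbar_SN _ _ _ Hq1).
  - exact (lbar_NS _ _ _ Hq1).
  - exact (fbar_NN _ _ _ _ _ Hq2).
Qed.

Lemma B_FF_ord f1 f2 f1' f2' a b c a' b' c' x0 y0 q :
  strongly_hyperbolic f1 -> strongly_hyperbolic f2 ->
  (forall x, 0 < x -> derivable_pt_lim f1 x (f1' x)) ->
  (forall x, 0 < x -> derivable_pt_lim f2 x (f2' x)) ->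
  strictly_convex_pos (fun x => ln (Rabs (f1' x))) ->
  strictly_convex_pos (fun x => ln (Rabs (f2' x))) ->
  0 < a -> 0 < a' -> b' < b -> x0 <> - b -> x0 <> - b' ->
  y0 = fabc f1 f2 a b c x0 -> y0 = fabc f1 f2 a' b' c' x0 ->
  slopeF f1' f2' a b x0 = slopeF f1' f2' a' b' x0 ->
  fbar f1 f2 a b c q -> fbar f1 f2 a' b' c' q -> q <> (Some x0, Some y0) -> False.
Proof.
  intros H1 H2 Hd1 Hd2 Hc1 Hc2 Ha Ha' Hbb Hx1 Hx2 Hp1 Hp2 Hsl Hq1 Hq2 Hqp.
  set (d := b - b'). assert (Hd : 0 < d) by (unfold d; lra).
  destruct q as [[z|] [y|]].
  2:{ apply fbar_SN in Hq1. apply fbar_SN in Hq2. lra. }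
  3:{ exact (fbar_NN _ _ _ _ _ Hq1). }
  - apply fbar_fin in Hq1. apply fbar_fin in Hq2.
    destruct Hq1 as [Hz1 Hy1]. destruct Hq2 as [Hz2 Hy2].
    destruct (Req_dec z x0) as [Hz|Hz].
    { subst z. apply Hqp. f_equal. f_equal. lra. }
    destruct (Rlt_dec (- b') x0) as [HI3 | HI3'].
    + rewrite !slope_R in Hsl by lra.
      set (v0 := x0 + b').
      replace (x0 + b) with (v0 + d) in Hsl by (unfold v0, d; ring).
      destruct (UL f1 f1' a a' d v0 H1 Hd1 Hc1 Ha Ha' Hd ltac:(unfold v0; lra) Hsl) as [Hlt Hpos].
      assert (Hk0 : kf f1 a a' d v0 = c' - c).
      { unfold kf, v0, d. rewrite !fabc_R in Hp1, Hp2 by lra.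
        replace (x0 + b' + (b - b')) with (x0 + b) by ring. lra. }
      assert (Hf0 : f1 (v0 + d) < f1 v0) by (apply sh_dec; auto; unfold v0; lra).
      assert (Hf0' : 0 < f1 (v0 + d)) by (apply sh_pos; auto; unfold v0; lra).
      assert (Haa : a' < a).
      { destruct (Rlt_dec a' a) as [|Hn]; auto. exfalso.
        assert (a * f1 (v0 + d) <= a' * f1 (v0 + d)) by (apply Rmult_le_compat_r; lra).
        assert (a' * f1 (v0 + d) < a' * f1 v0) by (apply Rmult_lt_compat_l; lra).
        unfold kf in Hpos. lra. }
      destruct (Rlt_dec (- b') z) as [Hz3 | Hz3'].
      * specialize (Hlt (z + b') ltac:(lra) ltac:(unfold v0; lra)).
        rewrite Hk0 in Hlt. unfold kf in Hlt. rewrite !fabc_R in Hy1, Hy2 by lra.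
        replace (z + b' + d) with (z + b) in Hlt by (unfold d; ring). lra.
      * destruct (Rlt_dec (- b) z) as [Hz2' | Hz2'].
        -- assert (fabc f1 f2 a b c x0 < fabc f1 f2 a b c z) by (apply fR_dec; auto; lra).
           assert (c' < fabc f1 f2 a' b' c' x0) by (apply fR_gt; auto; lra).
           assert (fabc f1 f2 a' b' c' z < c') by (apply fL_lt; auto; lra). lra.
        -- rewrite !fabc_L in Hy1, Hy2 by lra.
           replace (- z - b') with (- z - b + d) in Hy2 by (unfold d; ring).
           assert (f2 (- z - b + d) < f2 (- z - b)) by (apply sh_dec; auto; lra).
           assert (0 < f2 (- z - b + d)) by (apply sh_pos; auto; lra). nra.
    + destruct (Rlt_dec x0 (- b)) as [HI1 | HI2].
      * rewrite !slope_L in Hsl by lra.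
        set (u0 := - x0 - b).
        replace (- x0 - b') with (u0 + d) in Hsl by (unfold u0, d; ring).
        fold u0 in Hsl.
        destruct (UL f2 f2' a' a d u0 H2 Hd2 Hc2 Ha' Ha Hd ltac:(unfold u0; lra)
           ltac:(lra)) as [Hlt Hpos].
        assert (Hk0 : kf f2 a' a d u0 = c' - c).
        { unfold kf, u0, d. rewrite !fabc_L in Hp1, Hp2 by lra.
          replace (- x0 - b + (b - b')) with (- x0 - b') by ring. lra. }
        assert (Hf0 : f2 (u0 + d) < f2 u0) by (apply sh_dec; auto; unfold u0; lra).
        assert (Hf0' : 0 < f2 (u0 + d)) by (apply sh_pos; auto; unfold u0; lra).
        assert (Haa : a < a').
        { destruct (Rlt_dec a a') as [|Hn]; auto. exfalso.
          assert (a' * f2 (u0 + d) <= a * f2 (u0 + d)) by (apply Rmult_le_compat_r; lra).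
          assert (a * f2 (u0 + d) < a * f2 u0) by (apply Rmult_lt_compat_l; lra).
          unfold kf in Hpos. lra. }
        destruct (Rlt_dec z (- b)) as [Hz1' | Hz1'].
        -- specialize (Hlt (- z - b) ltac:(lra) ltac:(unfold u0; lra)).
           rewrite Hk0 in Hlt. unfold kf in Hlt. rewrite !fabc_L in Hy1, Hy2 by lra.
           replace (- z - b + d) with (- z - b') in Hlt by (unfold d; ring). lra.
        -- destruct (Rlt_dec z (- b')) as [Hz2' | Hz2'].
           ++ assert (fabc f1 f2 a' b' c' z < fabc f1 f2 a' b' c' x0) by (apply fL_dec; auto; lra).
              assert (fabc f1 f2 a b c x0 < c) by (apply fL_lt; auto; lra).
              assert (c < fabc f1 f2 a b c z) by (apply fR_gt; auto; lra). lra.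
           ++ rewrite !fabc_R in Hy1, Hy2 by lra.
              replace (z + b) with (z + b' + d) in Hy1 by (unfold d; ring).
              assert (f1 (z + b' + d) < f1 (z + b')) by (apply sh_dec; auto; lra).
              assert (0 < f1 (z + b' + d)) by (apply sh_pos; auto; lra). nra.
      * assert (HI2' : - b < x0) by lra. assert (HI3 : x0 < - b') by lra.
        rewrite slope_R in Hsl by lra. rewrite slope_L in Hsl by lra.
        assert (Hy0c : c < y0) by (rewrite Hp1; apply fR_gt; auto).
        assert (Hy0c' : y0 < c') by (rewrite Hp2; apply fL_lt; auto).
        destruct (Rlt_dec (- b) z) as [Hza | Hza].
        -- destruct (Rlt_dec z (- b')) as [Hzb | Hzb].
           ++ assert (T := tangent (fun x => - b < x /\ x < - b')
                (fun y => (a * f1 (y + b) + c) - (- a' * f2 (- y - b') + c')) x0 z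
                (a * f1' (x0 + b) - a' * f2' (- x0 - b'))
                (cI2 f1 f2 a b c a' b' c' (sh_conv f1 H1) (sh_conv f2 H2) Ha Ha')
                ltac:(intros; lra) ltac:(lra) ltac:(lra) Hz
                ltac:(apply d_minus; [apply dR; auto; lra | apply dL; auto; lra])).
              simpl in T. rewrite fabc_R in Hp1, Hy1 by lra. rewrite fabc_L in Hp2, Hy2 by lra.
              rewrite Hsl in T. lra.
           ++ assert (fabc f1 f2 a b c z < fabc f1 f2 a b c x0) by (apply fR_dec; auto; lra).
              assert (c' < fabc f1 f2 a' b' c' z) by (apply fR_gt; auto; lra). lra.
        -- assert (fabc f1 f2 a' b' c' x0 < fabc f1 f2 a' b' c' z) by (apply fL_dec; auto; lra).
           assert (fabc f1 f2 a b c z < c) by (apply fL_lt; auto; lra). lra.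
  - apply fbar_NS in Hq1. apply fbar_NS in Hq2.
    subst y. subst c'.
    destruct (Rlt_dec (- b') x0) as [HI3 | HI3'].
    + rewrite !slope_R in Hsl by lra.
      set (v0 := x0 + b').
      replace (x0 + b) with (v0 + d) in Hsl by (unfold v0, d; ring).
      destruct (UL f1 f1' a a' d v0 H1 Hd1 Hc1 Ha Ha' Hd ltac:(unfold v0; lra) Hsl) as [Hlt Hpos].
      unfold kf, v0, d in Hpos. rewrite !fabc_R in Hp1, Hp2 by lra.
      replace (x0 + b' + (b - b')) with (x0 + b) in Hpos by ring. lra.
    + destruct (Rlt_dec x0 (- b)) as [HI1 | HI2].
      * rewrite !slope_L in Hsl by lra.
        set (u0 := - x0 - b).
        replace (- x0 - b') with (u0 + d) in Hsl by (unfold u0, d; ring).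
        fold u0 in Hsl.
        destruct (UL f2 f2' a' a d u0 H2 Hd2 Hc2 Ha' Ha Hd ltac:(unfold u0; lra)
           ltac:(lra)) as [Hlt Hpos].
        unfold kf, u0, d in Hpos. rewrite !fabc_L in Hp1, Hp2 by lra.
        replace (- x0 - b + (b - b')) with (- x0 - b') in Hpos by ring. lra.
      * assert (c < y0) by (rewrite Hp1; apply fR_gt; auto; lra).
        assert (y0 < c) by (rewrite Hp2; apply fL_lt; auto; lra). lra.
Qed.

Lemma B_FF f1 f2 f1' f2' a b c a' b' c' x0 y0 q :
  strongly_hyperbolic f1 -> strongly_hyperbolic f2 ->
  (forall x, 0 < x -> derivable_pt_lim f1 x (f1' x)) ->
  (forall x, 0 < x -> derivable_pt_lim f2 x (f2' x)) ->
  strictly_convex_pos (fun x => ln (Rabs (f1' x))) ->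
  strictly_convex_pos (fun x => ln (Rabs (f2' x))) ->
  0 < a -> 0 < a' -> x0 <> - b -> x0 <> - b' ->
  y0 = fabc f1 f2 a b c x0 -> y0 = fabc f1 f2 a' b' c' x0 ->
  slopeF f1' f2' a b x0 = slopeF f1' f2' a' b' x0 ->
  fbar f1 f2 a b c q -> fbar f1 f2 a' b' c' q -> q <> (Some x0, Some y0) ->
  fbar f1 f2 a b c = fbar f1 f2 a' b' c'.
Proof.
  intros H1 H2 Hd1 Hd2 Hc1 Hc2 Ha Ha' Hx1 Hx2 Hp1 Hp2 Hsl Hq1 Hq2 Hqp.
  destruct (Rtotal_order b' b) as [Hb | [Hb | Hb]].
  - exfalso. exact (B_FF_ord f1 f2 f1' f2' a b c a' b' c' x0 y0 q H1 H2 Hd1 Hd2 Hc1 Hc2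
      Ha Ha' Hb Hx1 Hx2 Hp1 Hp2 Hsl Hq1 Hq2 Hqp).
  - subst b'. destruct (Rlt_dec (- b) x0) as [Hr|Hl'].
    + rewrite !slope_R in Hsl by lra. rewrite !fabc_R in Hp1, Hp2 by lra.
      assert (f1' (x0 + b) < 0) by (apply (sh_dneg f1 f1'); auto; lra).
      assert (a = a') by (apply (Rmult_eq_reg_r (f1' (x0 + b))); lra). subst a'.
      assert (c = c') by lra. subst c'. reflexivity.
    + rewrite !slope_L in Hsl by lra. rewrite !fabc_L in Hp1, Hp2 by lra.
      assert (f2' (- x0 - b) < 0) by (apply (sh_dneg f2 f2'); auto; lra).
      assert (a = a') by (apply (Rmult_eq_reg_r (f2' (- x0 - b))); lra). subst a'.
      assert (c = c') by lra. subst c'. reflexivity.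
  - exfalso. exact (B_FF_ord f1 f2 f1' f2' a' b' c' a b c x0 y0 q H1 H2 Hd1 Hd2 Hc1 Hc2
      Ha' Ha Hb Hx2 Hx1 Hp2 Hp1 (eq_sym Hsl) Hq2 Hq1 Hqp).
Qed.

Lemma P_SN_a f1 f2 f1' f2' a b c a' c' :
  strongly_hyperbolic f1 -> strongly_hyperbolic f2 ->
  (forall x, 0 < x -> derivable_pt_lim f1 x (f1' x)) ->
  (forall x, 0 < x -> derivable_pt_lim f2 x (f2' x)) ->
  0 < a -> 0 < a' ->
  (forall z, fbar f1 f2 a b c z -> fbar f1 f2 a' b c' z -> z = (Some (- b), None)) ->
  a = a'.
Proof.
  intros H1 H2 Hd1 Hd2 Ha Ha' Ht.
  destruct (Req_dec a a') as [|Hne]; auto. exfalso.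
  destruct (Req_dec c c') as [Hc|Hc].
  { subst c'. specialize (Ht _ (fbar_NS_i f1 f2 a b c) (fbar_NS_i f1 f2 a' b c)). discriminate. }
  set (r := (c' - c) / (a - a')).
  assert (Hr : r <> 0).
  { unfold r. unfold Rdiv. apply Rmult_integral_contrapositive. split; [lra|].
    apply Rinv_neq_0_compat. lra. }
  destruct (Rlt_dec 0 r) as [Hrp|Hrn].
  - destruct (surj f1 f1' r H1 Hd1 Hrp) as [u [Hu Hfu]].
    assert (E : fabc f1 f2 a b c (u - b) = fabc f1 f2 a' b c' (u - b)).
    { rewrite !fabc_R by lra. replace (u - b + b) with u by ring. rewrite Hfu.
      unfold r. field. lra. }
    assert (A := fbar_fin_i f1 f2 a b c (u - b) ltac:(lra)).
    assert (B := fbar_fin_i f1 f2 a' b c' (u - b) ltac:(lra)). rewrite <- E in B.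
    specialize (Ht _ A B). discriminate.
  - assert (Hrp : 0 < - r) by lra.
    destruct (surj f2 f2' (- r) H2 Hd2 Hrp) as [u [Hu Hfu]].
    assert (E : fabc f1 f2 a b c (- u - b) = fabc f1 f2 a' b c' (- u - b)).
    { rewrite !fabc_L by lra. replace (- (- u - b) - b) with u by ring. rewrite Hfu.
      unfold r. field. lra. }
    assert (A := fbar_fin_i f1 f2 a b c (- u - b) ltac:(lra)).
    assert (B := fbar_fin_i f1 f2 a' b c' (- u - b) ltac:(lra)). rewrite <- E in B.
    specialize (Ht _ A B). discriminate.
Qed.

Lemma P_NS_a_ord f1 f2 f1' f2' a b c a' b' :
  strongly_hyperbolic f1 -> strongly_hyperbolic f2 ->
  (forall x, 0 < x -> derivable_pt_lim f1 x (f1' x)) ->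
  (forall x, 0 < x -> derivable_pt_lim f2 x (f2' x)) ->
  0 < a -> 0 < a' -> b' < b ->
  (forall z, fbar f1 f2 a b c z -> fbar f1 f2 a' b' c z -> z = (None, Some c)) ->
  a = a'.
Proof.
  intros H1 H2 Hd1 Hd2 Ha Ha' Hb Ht.
  set (d := b - b'). assert (Hd : 0 < d) by (unfold d; lra).
  destruct (Rtotal_order a a') as [Hl | [He | Hg]]; auto; exfalso.
  - destruct (zero_exist2 f2 f2' a' a d H2 Hd2 Ha Hl Hd) as [u [Hu Hk]]. unfold kf in Hk.
    assert (E : fabc f1 f2 a b c (- u - b) = fabc f1 f2 a' b' c (- u - b)).
    { rewrite !fabc_L by lra. replace (- (- u - b) - b) with u by ring.
      replace (- (- u - b) - b') with (u + d) by (unfold d; ring). lra. }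
    assert (A := fbar_fin_i f1 f2 a b c (- u - b) ltac:(lra)).
    assert (B := fbar_fin_i f1 f2 a' b' c (- u - b) ltac:(lra)). rewrite <- E in B.
    specialize (Ht _ A B). discriminate.
  - destruct (zero_exist2 f1 f1' a a' d H1 Hd1 Ha' Hg Hd) as [v [Hv Hk]]. unfold kf in Hk.
    assert (E : fabc f1 f2 a b c (v - b') = fabc f1 f2 a' b' c (v - b')).
    { rewrite !fabc_R by lra. replace (v - b' + b') with v by ring.
      replace (v - b' + b) with (v + d) by (unfold d; ring). lra. }
    assert (A := fbar_fin_i f1 f2 a b c (v - b') ltac:(lra)).
    assert (B := fbar_fin_i f1 f2 a' b' c (v - b') ltac:(lra)). rewrite <- E in B.
    specialize (Ht _ A B). discriminate.
Qed.

Lemma P_NS_a f1 f2 f1' f2' a b c a' b' :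
  strongly_hyperbolic f1 -> strongly_hyperbolic f2 ->
  (forall x, 0 < x -> derivable_pt_lim f1 x (f1' x)) ->
  (forall x, 0 < x -> derivable_pt_lim f2 x (f2' x)) ->
  0 < a -> 0 < a' ->
  (forall z, fbar f1 f2 a b c z -> fbar f1 f2 a' b' c z -> z = (None, Some c)) ->
  a = a'.
Proof.
  intros H1 H2 Hd1 Hd2 Ha Ha' Ht.
  destruct (Rtotal_order b' b) as [Hb | [Hb | Hb]].
  - exact (P_NS_a_ord f1 f2 f1' f2' a b c a' b' H1 H2 Hd1 Hd2 Ha Ha' Hb Ht).
  - subst b'. specialize (Ht _ (fbar_SN_i f1 f2 a b c) (fbar_SN_i f1 f2 a' b c)).
    discriminate.
  - symmetry. exact (P_NS_a_ord f1 f2 f1' f2' a' b' c a b H1 H2 Hd1 Hd2 Ha' Ha Hb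
      (fun z h1 h2 => Ht z h2 h1)).
Qed.

Lemma fabc_inj_c f1 f2 a b c1 c2 x :
  fabc f1 f2 a b c1 x = fabc f1 f2 a b c2 x -> c1 = c2.
Proof. unfold fabc. destruct (Rlt_dec (- b) x); lra. Qed.

Lemma fabc_inj_b f1 f2 a b1 b2 c x : strongly_hyperbolic f1 -> strongly_hyperbolic f2 ->
  0 < a -> x <> - b1 -> x <> - b2 ->
  fabc f1 f2 a b1 c x = fabc f1 f2 a b2 c x -> b1 = b2.
Proof.
  intros H1 H2 Ha Hx1 Hx2 E.
  destruct (Rtotal_order b1 b2) as [Hb | [Hb | Hb]]; auto; exfalso.
  - destruct (Rlt_dec (- b1) x); destruct (Rlt_dec (- b2) x).
    + rewrite !fabc_R in E by lra.
      assert (f1 (x + b2) < f1 (x + b1)) by (apply sh_dec; auto; lra). nra.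
    + lra.
    + assert (c < fabc f1 f2 a b2 c x) by (apply fR_gt; auto).
      assert (fabc f1 f2 a b1 c x < c) by (apply fL_lt; auto; lra). lra.
    + rewrite !fabc_L in E by lra.
      assert (f2 (- x - b1) < f2 (- x - b2)) by (apply sh_dec; auto; lra). nra.
  - destruct (Rlt_dec (- b1) x); destruct (Rlt_dec (- b2) x).
    + rewrite !fabc_R in E by lra.
      assert (f1 (x + b1) < f1 (x + b2)) by (apply sh_dec; auto; lra). nra.
    + assert (c < fabc f1 f2 a b1 c x) by (apply fR_gt; auto).
      assert (fabc f1 f2 a b2 c x < c) by (apply fL_lt; auto; lra). lra.
    + lra.
    + rewrite !fabc_L in E by lra.
      assert (f2 (- x - b2) < f2 (- x - b1)) by (apply sh_dec; auto; lra). nra.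
Qed.

Lemma LL_slope s t s1 t1 :
  (forall z, lbar s t z -> lbar s1 t1 z -> z = (None, None)) -> s1 = s.
Proof.
  intros Ht. destruct (Req_dec s1 s) as [|Hne]; auto. exfalso.
  set (x := (t1 - t) / (s - s1)).
  assert (E : s * x + t = s1 * x + t1) by (unfold x; field; lra).
  assert (B := lbar_fin_i s1 t1 x). rewrite <- E in B.
  specialize (Ht _ (lbar_fin_i s t x) B). discriminate.
Qed.

Theorem theorem4p14 (f1 f2 : R -> R)
  (hf1 : strongly_hyperbolic f1) (hf2 : strongly_hyperbolic f2)
  (C : Pt -> Prop) (p q : Pt)
  (hC : in_Cminus f1 f2 C) (hp : C p) (hq : ~ C q) (hpq : ~ parallel p q)
  (D1 D2 : Pt -> Prop) :
  in_Cminus f1 f2 D1 -> D1 p -> D1 q -> (forall z, (C z /\ D1 z) <-> z = p) ->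
  in_Cminus f1 f2 D2 -> D2 p -> D2 q -> (forall z, (C z /\ D2 z) <-> z = p) ->
  D1 = D2.
Proof.
  intros hD1 h1p h1q hT1 hD2 h2p h2q hT2.
  assert (T1 : forall z, C z -> D1 z -> z = p) by (intros z u v; apply hT1; auto).
  assert (T2 : forall z, C z -> D2 z -> z = p) by (intros z u v; apply hT2; auto).
  assert (Hqp : q <> p) by (intros E; subst; auto).
  clear hT1 hT2.
  pose proof hf1 as (_ & _ & _ & _ & _ & f1' & Hd1 & Hc1).
  pose proof hf2 as (_ & _ & _ & _ & _ & f2' & Hd2 & Hc2).
  destruct p as [[x0|] [y0|]].
  - destruct hC as [[a [b [c [Ha ->]]]] | [s [t [Hs ->]]]];
    destruct hD1 as [[a1 [b1 [c1 [Ha1 ->]]]] | [s1 [t1 [Hs1 ->]]]];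
    destruct hD2 as [[a2 [b2 [c2 [Ha2 ->]]]] | [s2 [t2 [Hs2 ->]]]].
    +
      apply fbar_fin in hp, h1p, h2p.
      destruct hp as [Hx Hy]. destruct h1p as [Hx1 Hy1]. destruct h2p as [Hx2 Hy2].
      assert (S1 := A_FF f1 f2 f1' f2' a b c a1 b1 c1 x0 y0 hf1 hf2 Hd1 Hd2 Ha Ha1 Hx Hx1 Hy Hy1 T1).
      assert (S2 := A_FF f1 f2 f1' f2' a b c a2 b2 c2 x0 y0 hf1 hf2 Hd1 Hd2 Ha Ha2 Hx Hx2 Hy Hy2 T2).
      exact (B_FF f1 f2 f1' f2' a1 b1 c1 a2 b2 c2 x0 y0 q hf1 hf2 Hd1 Hd2 Hc1 Hc2
        Ha1 Ha2 Hx1 Hx2 Hy1 Hy2 ltac:(congruence) h1q h2q Hqp).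
    +
      apply fbar_fin in hp, h1p. apply lbar_fin in h2p.
      destruct hp as [Hx Hy]. destruct h1p as [Hx1 Hy1]. rewrite h2p in *; clear h2p.
      assert (S1 := A_FF f1 f2 f1' f2' a b c a1 b1 c1 x0 _ hf1 hf2 Hd1 Hd2 Ha Ha1 Hx Hx1 Hy Hy1 T1).
      assert (S2 := A_LF f1 f2 f1' f2' s2 t2 a b c x0 hf1 hf2 Hd1 Hd2 Hs2 Ha Hx (eq_sym Hy)
        (fun z u v => T2 z v u)).
      exfalso. exact (B_LF f1 f2 f1' f2' s2 t2 a1 b1 c1 x0 _ q hf1 hf2 Hd1 Hd2 Hs2 Ha1 Hx1
        eq_refl Hy1 ltac:(congruence) h2q h1q Hqp).
    +
      apply fbar_fin in hp, h2p. apply lbar_fin in h1p.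
      destruct hp as [Hx Hy]. destruct h2p as [Hx2 Hy2]. rewrite h1p in *; clear h1p.
      assert (S2 := A_FF f1 f2 f1' f2' a b c a2 b2 c2 x0 _ hf1 hf2 Hd1 Hd2 Ha Ha2 Hx Hx2 Hy Hy2 T2).
      assert (S1 := A_LF f1 f2 f1' f2' s1 t1 a b c x0 hf1 hf2 Hd1 Hd2 Hs1 Ha Hx (eq_sym Hy)
        (fun z u v => T1 z v u)).
      exfalso. exact (B_LF f1 f2 f1' f2' s1 t1 a2 b2 c2 x0 _ q hf1 hf2 Hd1 Hd2 Hs1 Ha2 Hx2
        eq_refl Hy2 ltac:(congruence) h1q h2q Hqp).
    +
      apply fbar_fin in hp. apply lbar_fin in h1p. apply lbar_fin in h2p.
      destruct hp as [Hx Hy]. rewrite h1p in *; clear h1p.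
      assert (S1 := A_LF f1 f2 f1' f2' s1 t1 a b c x0 hf1 hf2 Hd1 Hd2 Hs1 Ha Hx (eq_sym Hy)
        (fun z u v => T1 z v u)).
      assert (S2 := A_LF f1 f2 f1' f2' s2 t2 a b c x0 hf1 hf2 Hd1 Hd2 Hs2 Ha Hx
        ltac:(rewrite <- Hy; exact h2p) ltac:(rewrite <- h2p; exact (fun z u v => T2 z v u))).
      assert (E : s2 = s1) by congruence. rewrite E in *.
      assert (E' : t2 = t1) by lra. rewrite E'. reflexivity.
    +
      apply lbar_fin in hp. apply fbar_fin in h1p, h2p.
      destruct h1p as [Hx1 Hy1]. destruct h2p as [Hx2 Hy2]. rewrite hp in *; clear hp.
      assert (S1 := A_LF f1 f2 f1' f2' s t a1 b1 c1 x0 hf1 hf2 Hd1 Hd2 Hs Ha1 Hx1 (eq_sym Hy1) T1).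
      assert (S2 := A_LF f1 f2 f1' f2' s t a2 b2 c2 x0 hf1 hf2 Hd1 Hd2 Hs Ha2 Hx2 (eq_sym Hy2) T2).
      exact (B_FF f1 f2 f1' f2' a1 b1 c1 a2 b2 c2 x0 _ q hf1 hf2 Hd1 Hd2 Hc1 Hc2
        Ha1 Ha2 Hx1 Hx2 Hy1 Hy2 ltac:(congruence) h1q h2q Hqp).
    + specialize (T2 _ (lbar_NN_i s t) (lbar_NN_i s2 t2)). discriminate.
    + specialize (T1 _ (lbar_NN_i s t) (lbar_NN_i s1 t1)). discriminate.
    + specialize (T1 _ (lbar_NN_i s t) (lbar_NN_i s1 t1)). discriminate.
  -
    destruct hC as [[a [b [c [Ha ->]]]] | [s [t [Hs ->]]]].
    2:{ exfalso. exact (lbar_SN _ _ _ hp). }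
    destruct hD1 as [[a1 [b1 [c1 [Ha1 ->]]]] | [s1 [t1 [Hs1 ->]]]].
    2:{ exfalso. exact (lbar_SN _ _ _ h1p). }
    destruct hD2 as [[a2 [b2 [c2 [Ha2 ->]]]] | [s2 [t2 [Hs2 ->]]]].
    2:{ exfalso. exact (lbar_SN _ _ _ h2p). }
    apply fbar_SN in hp, h1p, h2p.
    assert (b1 = b) by lra. assert (b2 = b) by lra. subst b1 b2 x0.
    assert (E1 := P_SN_a f1 f2 f1' f2' a b c a1 c1 hf1 hf2 Hd1 Hd2 Ha Ha1 T1).
    assert (E2 := P_SN_a f1 f2 f1' f2' a b c a2 c2 hf1 hf2 Hd1 Hd2 Ha Ha2 T2).
    subst a1 a2.
    destruct q as [[xq|] [yq|]].
    + apply fbar_fin in h1q, h2q. destruct h1q as [_ E1]. destruct h2q as [_ E2].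
      rewrite E1 in E2. apply fabc_inj_c in E2. subst. reflexivity.
    + exfalso. apply hpq. right. reflexivity.
    + apply fbar_NS in h1q, h2q. subst. reflexivity.
    + exfalso. exact (fbar_NN _ _ _ _ _ h1q).
  -
    destruct hC as [[a [b [c [Ha ->]]]] | [s [t [Hs ->]]]].
    2:{ exfalso. exact (lbar_NS _ _ _ hp). }
    destruct hD1 as [[a1 [b1 [c1 [Ha1 ->]]]] | [s1 [t1 [Hs1 ->]]]].
    2:{ exfalso. exact (lbar_NS _ _ _ h1p). }
    destruct hD2 as [[a2 [b2 [c2 [Ha2 ->]]]] | [s2 [t2 [Hs2 ->]]]].
    2:{ exfalso. exact (lbar_NS _ _ _ h2p). }
    apply fbar_NS in hp, h1p, h2p. subst y0 c1 c2.
    assert (E1 := P_NS_a f1 f2 f1' f2' a b c a1 b1 hf1 hf2 Hd1 Hd2 Ha Ha1 T1).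
    assert (E2 := P_NS_a f1 f2 f1' f2' a b c a2 b2 hf1 hf2 Hd1 Hd2 Ha Ha2 T2).
    subst a1 a2.
    destruct q as [[xq|] [yq|]].
    + apply fbar_fin in h1q, h2q. destruct h1q as [Hx1 E1]. destruct h2q as [Hx2 E2].
      rewrite E1 in E2. assert (b1 = b2) by (apply (fabc_inj_b f1 f2 a b1 b2 c xq); auto).
      subst. reflexivity.
    + apply fbar_SN in h1q, h2q. assert (b1 = b2) by lra. subst. reflexivity.
    + exfalso. apply hpq. left. reflexivity.
    + exfalso. apply hpq. left. reflexivity.
  -
    destruct hC as [[a [b [c [Ha ->]]]] | [s [t [Hs ->]]]].
    { exfalso. exact (fbar_NN _ _ _ _ _ hp). }
    destruct hD1 as [[a1 [b1 [c1 [Ha1 ->]]]] | [s1 [t1 [Hs1 ->]]]].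
    { exfalso. exact (fbar_NN _ _ _ _ _ h1p). }
    destruct hD2 as [[a2 [b2 [c2 [Ha2 ->]]]] | [s2 [t2 [Hs2 ->]]]].
    { exfalso. exact (fbar_NN _ _ _ _ _ h2p). }
    assert (E1 := LL_slope s t s1 t1 T1). assert (E2 := LL_slope s t s2 t2 T2).
    subst s1 s2.
    destruct q as [[xq|] [yq|]].
    + apply lbar_fin in h1q, h2q. assert (t1 = t2) by lra. subst. reflexivity.
    + exfalso. exact (lbar_SN _ _ _ h1q).
    + exfalso. exact (lbar_NS _ _ _ h1q).
    + exfalso. apply hpq. left. reflexivity.
Qed.
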